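(* Under the setting and with the A-CODER iterates described in the context, for every $k\ge1$ and every $u\in\mathbb{R}^d$, $$E_k(u)\le a_k\langle\nabla f(x_k)-p_k,v_k-u\rangle-a_{k-1}\langle\nabla f(x_{k-1})-p_{k-1},v_{k-1}-u\rangle-\frac{1+A_{k-1}\gamma}{10}\|v_k-v_{k-1}\|^2+\frac{1+A_{k-2}\gamma}{10}\|v_{k-1}-v_{k-2}\|^2,$$ where $E_k(u)=A_k(f(y_k)-f(x_k))-A_{k-1}(f(y_{k-1})-f(x_k))-a_k\langle q_k,v_k-x_k\rangle+a_k\langle\nabla f(x_k)-q_k,x_k-u\rangle-\frac{1+A_{k-1}\gamma}{2}\|v_k-v_{k-1}\|^2$ (with the convention $A_{-1}=0$).
   Context: Setting. Problem $\min_{x\in\mathbb{R}^d}\bar f(x)=f(x)+g(x)$. Coordinates $\{1,\dots,d\}$ are partitioned into $m$ consecutive blocks $\mathcal{S}^1,\dots,\mathcal{S}^m$; $x^{(j)}$ is the block-$j$ subvector of $x$ and $\nabla^{(j)}f$ the block-$j$ part of $\nabla f$. $f$ is convex and continuously differentiable. $g(x)=\sum_{j=1}^m g^j(x^{(j)})$ is proper, lower semicontinuous, and $\gamma$-strongly convex with $\gamma\ge0$. $\mathrm{prox}_{\tau h}(w)=\arg\min_x\{\tau h(x)+\frac12\|x-w\|^2\}$. Block Lipschitz assumption: there are PSD matrices $Q^1,\dots,Q^m$ with $\|\nabla^{(j)}f(x)-\nabla^{(j)}f(y)\|^2\le(x-y)^\top Q^j(x-y)$ for all $x,y$ and $j$.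 For a $d\times d$ matrix $Q$, $(Q)_{\ge j}$ zeroes all rows and columns indexed by blocks $1,\dots,j-1$. $\tilde Q=\sum_{j=1}^m[(Q^j)_{\ge j}+(Q^j)_{\ge j+1}]$, $L>0$ with $L^2=2\|\tilde Q\|<\infty$. A-CODER iterates. Given $x_0\in\mathrm{dom}(g)$: set $x_{-1}=x_0=v_{-1}=v_0=y_0$, $p_0=\nabla f(x_0)$, $z_0=0$, $a_0=A_0=0$. For $k=1,2,\dots$: let $a_k>0$ be the largest value with $\frac{a_k^2}{A_k}\le\frac{2(1+A_{k-1}\gamma)}{5L}$ where $A_k=A_{k-1}+a_k$; set $x_k=\frac{A_{k-1}}{A_k}y_{k-1}+\frac{a_k}{A_k}v_{k-1}$; then for $j=m,m-1,\dots,1$ (in this order): $p_k^{(j)}=\nabla^{(j)}f(x_k^{(1)},\dots,x_k^{(j)},y_k^{(j+1)},\dots,y_k^{(m)})$; $q_k^{(j)}=p_k^{(j)}+\frac{a_{k-1}}{a_k}(\nabla^{(j)}f(x_{k-1})-p_{k-1}^{(j)})$; $z_k^{(j)}=z_{k-1}^{(j)}+a_kq_k^{(j)}$; $v_k^{(j)}=\mathrm{prox}_{A_kg^j}(x_0^{(j)}-z_k^{(j)})$; $y_k^{(j)}=\frac{A_{k-1}}{A_k}y_{k-1}^{(j)}+\frac{a_k}{A_k}v_k^{(j)}$. Here $p_k=(p_k^{(1)},\dots,p_k^{(m)})$, $q_k$, $v_k$, $y_k$ are assembled from their blocks. *)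

(* Defs.v *)
From HB Require Import structures.
From mathcomp Require Import all_boot all_order all_algebra.
From mathcomp Require Import all_classical all_reals all_analysis.
Set Implicit Arguments. Unset Strict Implicit. Unset Printing Implicit Defensive.
Import Order.TTheory GRing.Theory Num.Theory.
Import numFieldNormedType.Exports.
Local Open Scope ring_scope.

Section Defs.
Variables (R : realType) (d m : nat).

Definition dotp (u v : 'rV[R]_d) : R := \sum_(i < d) u ord0 i * v ord0 i.
Definition sqnorm (u : 'rV[R]_d) : R := dotp u u.
Definition enorm (u : 'rV[R]_d) : R := Num.sqrt (sqnorm u).

Definition quadf (Q : 'M[R]_d) (u : 'rV[R]_d) : R := (u *m Q *m u^T) ord0 ord0.
Definition psd (Q : 'M[R]_d) : Prop := Q^T = Q /\ forall u, 0 <= quadf Q u.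

Definition opnorm2 (Q : 'M[R]_d) : R :=
  sup [set r : R | exists u : 'rV[R]_d, sqnorm u = 1 /\ r = enorm (Q *m u^T)^T].

(* partition of coordinates into m consecutive (nonempty) blocks:
   blk i = index (0-based) of the block containing coordinate i *)
Definition consecutive_blocks (blk : 'I_d -> 'I_m) : Prop :=
  (forall i i' : 'I_d, (i <= i')%N -> (blk i <= blk i')%N) /\
  (forall j : 'I_m, exists i, blk i = j).

Definition bmask (blk : 'I_d -> 'I_m) (j : 'I_m) (u : 'rV[R]_d) : 'rV[R]_d :=
  \row_i (if blk i == j then u ord0 i else 0).

(* (x^(1),...,x^(j), y^(j+1),...,y^(m)) *)
Definition mixv (blk : 'I_d -> 'I_m) (j : 'I_m) (x y : 'rV[R]_d) : 'rV[R]_d :=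
  \row_i (if (blk i <= j)%N then x ord0 i else y ord0 i).

(* (Q)_{>= j} with 0-based block index j (nat, so j = m gives the zero matrix) *)
Definition trunc_ge (blk : 'I_d -> 'I_m) (j : nat) (Q : 'M[R]_d) : 'M[R]_d :=
  \matrix_(r, c) (if (j <= blk r)%N && (j <= blk c)%N then Q r c else 0).

Definition Qtilde (blk : 'I_d -> 'I_m) (Q : 'I_m -> 'M[R]_d) : 'M[R]_d :=
  \sum_(j < m) (trunc_ge blk j (Q j) + trunc_ge blk j.+1 (Q j)).

Definition depends_only_on_block (blk : 'I_d -> 'I_m) (j : 'I_m)
  (h : 'rV[R]_d -> \bar R) : Prop :=
  forall x y : 'rV[R]_d, (forall i, blk i = j -> x ord0 i = y ord0 i) -> h x = h y.

Definition convex_fun (f : 'rV[R]_d -> R) : Prop :=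
  forall (x y : 'rV[R]_d) (t : R), 0 <= t <= 1 ->
    f (t *: x + (1 - t) *: y) <= t * f x + (1 - t) * f y.

Definition proper_fun (g : 'rV[R]_d -> \bar R) : Prop :=
  (forall x, g x != -oo%E) /\ (exists x, (g x < +oo)%E).

Definition strongly_convex (gamma : R) (g : 'rV[R]_d -> \bar R) : Prop :=
  forall (x y : 'rV[R]_d) (t : R), 0 < t < 1 ->
    (g (t *: x + (1 - t) *: y)%R <=
     t%:E * g x + (1 - t)%:E * g y - (gamma / 2 * t * (1 - t) * sqnorm (x - y))%:E)%E.

End Defs.

(* Main.v *)
Require Import Defs.
From HB Require Import structures.
From mathcomp Require Import all_boot all_order all_algebra.
From mathcomp Require Import all_classical all_reals all_analysis.
From mathcomp Require Import ring lra.
Import Order.TTheory GRing.Theory Num.Theory.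
Import numFieldNormedType.Exports.
Local Open Scope ring_scope.
Set Implicit Arguments. Unset Strict Implicit. Unset Printing Implicit Defensive.
Section Dot.
Variables (R : realType) (d : nat).
Implicit Types (u w h : 'rV[R]_d).

Lemma dotpC u w : dotp u w = dotp w u.
Proof. by apply: eq_bigr => i _; rewrite mulrC. Qed.

Lemma dotpDl u h w : dotp (u + h) w = dotp u w + dotp h w.
Proof. by rewrite /dotp -big_split; apply: eq_bigr => i _; rewrite mxE mulrDl. Qed.

Lemma dotpZl (c : R) u w : dotp (c *: u) w = c * dotp u w.
Proof. by rewrite /dotp mulr_sumr; apply: eq_bigr => i _; rewrite mxE mulrA. Qed.

Lemma dotpNl u w : dotp (- u) w = - dotp u w.
Proof. by rewrite -scaleN1r dotpZl mulN1r. Qed.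

Lemma dotpBl u h w : dotp (u - h) w = dotp u w - dotp h w.
Proof. by rewrite dotpDl dotpNl. Qed.

Lemma dotpDr u h w : dotp w (u + h) = dotp w u + dotp w h.
Proof. by rewrite dotpC dotpDl !(dotpC w). Qed.
Lemma dotpZr (c : R) u w : dotp w (c *: u) = c * dotp w u.
Proof. by rewrite dotpC dotpZl dotpC. Qed.
Lemma dotpNr u w : dotp w (- u) = - dotp w u.
Proof. by rewrite dotpC dotpNl dotpC. Qed.
Lemma dotpBr u h w : dotp w (u - h) = dotp w u - dotp w h.
Proof. by rewrite dotpDr dotpNr. Qed.

Lemma sqnorm_ge0 u : 0 <= sqnorm u.
Proof. by apply: sumr_ge0 => i _; rewrite -expr2 sqr_ge0. Qed.

Lemma sqnormZ (c : R) u : sqnorm (c *: u) = c ^+ 2 * sqnorm u.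
Proof. by rewrite /sqnorm dotpZl dotpZr mulrA -expr2. Qed.

Lemma sqnormN u : sqnorm (- u) = sqnorm u.
Proof. by rewrite /sqnorm dotpNl dotpNr opprK. Qed.

Lemma sqnormB u w : sqnorm (u - w) = sqnorm u - 2 * dotp u w + sqnorm w.
Proof.
rewrite /sqnorm dotpBl !dotpBr (dotpC w u); ring.
Qed.

Lemma young s u w : 0 < s -> dotp u w <= sqnorm u / (2 * s) + s * sqnorm w / 2.
Proof.
move=> s0; have := sqnorm_ge0 (u - s *: w).
rewrite sqnormB sqnormZ dotpZr => H.
have -> : sqnorm u / (2 * s) + s * sqnorm w / 2 =
   dotp u w + (sqnorm u - 2 * (s * dotp u w) + s ^+ 2 * sqnorm w) / (2 * s).
  by field; rewrite gt_eqF.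
by rewrite lerDl divr_ge0 // mulr_ge0 // ltW.
Qed.

End Dot.
Section Blocks.
Variables (R : realType) (d m : nat) (blk : 'I_d -> 'I_m).
Implicit Types (u w h : 'rV[R]_d).

Definition tmask (n : nat) u : 'rV[R]_d := \row_i (if (n <= blk i)%N then u ord0 i else 0).

Lemma quadfE (Q : 'M[R]_d) u :
  quadf Q u = \sum_i \sum_j u ord0 i * Q i j * u ord0 j.
Proof.
rewrite /quadf mxE (eq_bigr (fun i => \sum_k u ord0 k * Q k i * u ord0 i)).
  by rewrite exchange_big.
by move=> i _; rewrite !mxE mulr_suml; apply: eq_bigr.
Qed.

Lemma quadfD (Q1 Q2 : 'M[R]_d) u : quadf (Q1 + Q2) u = quadf Q1 u + quadf Q2 u.
Proof.
rewrite !quadfE -big_split; apply: eq_bigr => i _; rewrite -big_split.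
by apply: eq_bigr => j _; rewrite !mxE /=; ring.
Qed.

Lemma quadf0 u : quadf 0 u = 0.
Proof. by rewrite quadfE big1 // => i _; rewrite big1 // => j _; rewrite mxE mulr0 mul0r. Qed.

Lemma quadf_sum (I : finType) (F : I -> 'M[R]_d) u :
  quadf (\sum_i F i) u = \sum_i quadf (F i) u.
Proof.
apply: (big_ind2 (fun M r => quadf M u = r)).
- exact: quadf0.
- by move=> M1 r1 M2 r2 <- <-; rewrite quadfD.
- by [].
Qed.

Lemma quadf_trunc n (Q : 'M[R]_d) u :
  quadf (trunc_ge blk n Q) u = quadf Q (tmask n u).
Proof.
rewrite !quadfE; apply: eq_bigr => i _; apply: eq_bigr => j _; rewrite !mxE.
by case: (n <= blk i)%N; case: (n <= blk j)%N; rewrite ?mulr0 ?mul0r.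
Qed.

Lemma quadf_convex (Q : 'M[R]_d) (t : R) u w : psd Q ->
  0 <= t <= 1 ->
  quadf Q ((1 - t) *: u + t *: w) <= (1 - t) * quadf Q u + t * quadf Q w.
Proof.
move=> [_ Qp] /andP[t0 t1].
have E : (1 - t) * quadf Q u + t * quadf Q w - quadf Q ((1 - t) *: u + t *: w)
   = t * (1 - t) * quadf Q (u - w).
  rewrite !quadfE !mulr_sumr -!big_split -sumrB; apply: eq_bigr => i _.
  rewrite !mulr_sumr -!big_split -sumrB; apply: eq_bigr => j _; rewrite !mxE /=; ring.
rewrite -subr_ge0 E mulr_ge0 ?Qp // mulr_ge0 // subr_ge0 //.
Qed.

Lemma quadf_ge0 (Q : 'M[R]_d) u : psd Q -> 0 <= quadf Q u.
Proof. by case=> _; apply. Qed.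

Lemma dotp_bmask j u w : dotp u (bmask blk j w) = dotp (bmask blk j u) w.
Proof.
by apply: eq_bigr => i _; rewrite !mxE; case: (blk i == j); rewrite ?mulr0 ?mul0r.
Qed.

Lemma sum_bmask (F : 'I_d -> R) i :
  \sum_(j < m) (if blk i == j then F i else 0) = F i.
Proof.
rewrite (bigD1 (blk i)) //= eqxx big1 ?addr0 // => j /negbTE.
by rewrite eq_sym => ->.
Qed.

Lemma dotp_part u w : \sum_(j < m) dotp u (bmask blk j w) = dotp u w.
Proof.
rewrite /dotp exchange_big /=; apply: eq_bigr => i _.
rewrite -(sum_bmask (fun i => u ord0 i * w ord0 i)); apply: eq_bigr => j _.
by rewrite !mxE; case: (blk i == j); rewrite ?mulr0.
Qed.

Lemma bmaskK j u : bmask blk j (bmask blk j u) = bmask blk j u.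
Proof. by apply/rowP => i; rewrite !mxE; case: (blk i == j). Qed.

Lemma sqnorm_bmask j u : sqnorm (bmask blk j u) = dotp u (bmask blk j u).
Proof. by rewrite /sqnorm -dotp_bmask bmaskK. Qed.

Lemma sqnorm_part u : \sum_(j < m) sqnorm (bmask blk j u) = sqnorm u.
Proof.
by rewrite -[RHS]dotp_part; apply: eq_bigr => j _; rewrite sqnorm_bmask.
Qed.

Lemma quadf_Qtilde (Q : 'I_m -> 'M[R]_d) u :
  quadf (Qtilde blk Q) u =
  \sum_(j < m) (quadf (Q j) (tmask j u) + quadf (Q j) (tmask j.+1 u)).
Proof.
rewrite /Qtilde quadf_sum; apply: eq_bigr => j _.
by rewrite quadfD !quadf_trunc.
Qed.

End Blocks.
Section OpNorm.
Variables (R : realType) (d : nat).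
Implicit Types (u w h : 'rV[R]_d).

Definition hQ (Q : 'M[R]_d) u : 'rV[R]_d := (Q *m u^T)^T.

Lemma enorm_sqr u : enorm u ^+ 2 = sqnorm u.
Proof. by rewrite /enorm sqr_sqrtr // sqnorm_ge0. Qed.

Lemma enorm_ge0 u : 0 <= enorm u.
Proof. exact: sqrtr_ge0. Qed.

Lemma quadf_hQ (Q : 'M[R]_d) u : quadf Q u = dotp u (hQ Q u).
Proof.
rewrite /quadf -mulmxA mxE /dotp; apply: eq_bigr => i _.
by rewrite /hQ [in RHS]mxE.
Qed.

Lemma hQZ (Q : 'M[R]_d) (c : R) u : hQ Q (c *: u) = c *: hQ Q u.
Proof. by rewrite /hQ linearZ /= -scalemxAr linearZ. Qed.

Lemma hQ_coord (Q : 'M[R]_d) u i : hQ Q u ord0 i = dotp (row i Q) u.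
Proof.
by rewrite /hQ !mxE /dotp; apply: eq_bigr => j _; rewrite !mxE.
Qed.

Lemma sqnorm_eq0 u : sqnorm u = 0 -> u = 0.
Proof.
move=> /eqP; rewrite psumr_eq0 => [/allP H|i _]; last by rewrite -expr2 sqr_ge0.
apply/rowP => i; rewrite !mxE; have := H i (mem_index_enum _).
by rewrite /= mulf_eq0 orbb => /eqP.
Qed.

Lemma opnorm_ub (Q : 'M[R]_d) :
  has_ubound [set r : R | exists u : 'rV[R]_d, sqnorm u = 1 /\ r = enorm (Q *m u^T)^T].
Proof.
pose B0 := \sum_i ((sqnorm (row i Q) + 1) / 2) ^+ 2.
exists (1 + B0) => r [w [w1 ->]].
have hb : sqnorm (hQ Q w) <= B0.
  rewrite /sqnorm /dotp /B0; apply: ler_sum => i _; rewrite hQ_coord -expr2.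
  have y1 := young (row i Q) w ltr01.
  have y2 := young (- row i Q) w ltr01.
  rewrite /sqnorm in w1 y1 y2 *.
  rewrite !dotpNl dotpNr opprK w1 in y2; rewrite w1 in y1.
  set c := dotp (row i Q) w in y1 y2 *.
  set n := dotp (row i Q) (row i Q) in y1 y2 *.
  have n0 : 0 <= n by exact: sqnorm_ge0.
  nra.
have e0 := enorm_ge0 (hQ Q w).
have e2 := enorm_sqr (hQ Q w).
have B00 : 0 <= B0 by apply: sumr_ge0 => i _; rewrite sqr_ge0.
rewrite /hQ in e0 e2 hb.
nra.
Qed.

Lemma opnorm_bound (Q : 'M[R]_d) u : 0 < opnorm2 Q ->
  quadf Q u <= opnorm2 Q * sqnorm u.
Proof.
move=> S0; set S := opnorm2 Q.
have hS : sqnorm (hQ Q u) <= S ^+ 2 * sqnorm u.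
  have [s0|] := eqVneq (sqnorm u) 0.
    by rewrite (sqnorm_eq0 s0) -(scale0r (0:'rV[R]_d)) hQZ !sqnormZ expr0n /= !mul0r mulr0.
  move=> sn0; have sp : 0 < sqnorm u by rewrite lt_def sn0 sqnorm_ge0.
  set r := Num.sqrt (sqnorm u).
  have r0 : 0 < r by rewrite sqrtr_gt0.
  have r2 : r ^+ 2 = sqnorm u by rewrite sqr_sqrtr // ltW.
  set w := r^-1 *: u.
  have w1 : sqnorm w = 1 by rewrite sqnormZ exprVn r2 mulVf // gt_eqF.
  have hw : enorm (hQ Q w) <= S.
    apply: sup_upper_bound; last by exists w.
    split; last exact: opnorm_ub.
    by exists (enorm (hQ Q w)), w.
  have : u = r *: w by rewrite /w scalerA divff ?scale1r // gt_eqF.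
  move=> Hu; rewrite {1}Hu hQZ sqnormZ -enorm_sqr -r2.
  have e0 := enorm_ge0 (hQ Q w).
  have : enorm (hQ Q w) ^+ 2 <= S ^+ 2.
    by rewrite ler_sqr ?nnegrE //; apply: le_trans e0 hw.
  move=> H2; rewrite mulrC ler_wpM2r // sqr_ge0 //.
rewrite quadf_hQ dotpC.
have Y := young (hQ Q u) u S0.
have su := sqnorm_ge0 u.
apply: le_trans Y _.
have -> : sqnorm (hQ Q u) / (2 * S) + S * sqnorm u / 2 =
  (sqnorm (hQ Q u) + S^+2 * sqnorm u) / (2 * S) by field; rewrite gt_eqF.
rewrite ler_pdivrMr ?mulr_gt0 //.
nra.
Qed.

End OpNorm.
Section OneD.
Variable (R : realType).

Lemma riemann_step (phi psi : R -> R) (al be : R) (N : nat) :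
  (0 < N)%N ->
  (forall t s, phi s - phi t <= (s - t) * psi s) ->
  (forall s, 0 <= s <= 1 -> psi s <= al + be * s) ->
  forall n, (n <= N)%N ->
  phi (n%:R / N%:R) - phi 0 <= n%:R / N%:R * al + be * (n%:R * (n%:R + 1)) / (2 * N%:R ^+ 2).
Proof.
move=> N0 Hc Hb; elim=> [|n IH] hn.
  rewrite (_ : (0%N%:R : R) = 0) // !mul0r subrr mulr0 mul0r addr0 //.
have Np : 0 < N%:R :> R by rewrite ltr0n.
have h1 := IH (ltnW hn).
have h2 := Hc (n%:R / N%:R) (n.+1%:R / N%:R).
have h3 : psi (n.+1%:R / N%:R) <= al + be * (n.+1%:R / N%:R).
  apply: Hb; rewrite divr_ge0 ?ler0n //= ler_pdivrMr // mul1r ler_nat //.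
have e : n.+1%:R / N%:R - n%:R / N%:R = N%:R^-1 :> R.
  by rewrite -mulrBl -natrB // subSnn mul1r.
rewrite e in h2.
have h4 : N%:R^-1 * psi (n.+1%:R / N%:R) <= N%:R^-1 * (al + be * (n.+1%:R / N%:R)).
  by rewrite ler_pM2l // invr_gt0.
have -> : n.+1%:R / N%:R * al + be * (n.+1%:R * (n.+1%:R + 1)) / (2 * N%:R ^+ 2)
  = (n%:R / N%:R * al + be * (n%:R * (n%:R + 1)) / (2 * N%:R ^+ 2))
    + N%:R^-1 * (al + be * (n.+1%:R / N%:R)).
  rewrite -natr1; field; rewrite gt_eqF //.
lra.
Qed.

Lemma riemann (phi psi : R -> R) (al be : R) :
  (forall t s, phi s - phi t <= (s - t) * psi s) ->
  (forall s, 0 <= s <= 1 -> psi s <= al + be * s) ->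
  phi 1 - phi 0 <= al + be / 2.
Proof.
move=> Hc Hb.
have HN : forall N : nat, (0 < N)%N -> phi 1 - phi 0 <= al + be / 2 + be / (2 * N%:R).
  move=> N N0; have := riemann_step N0 Hc Hb (leqnn N).
  have Np : 0 < N%:R :> R by rewrite ltr0n.
  rewrite divff ?gt_eqF // mul1r.
  have -> : be * (N%:R * (N%:R + 1)) / (2 * N%:R ^+ 2) = be / 2 + be / (2 * N%:R).
    by field; rewrite gt_eqF.
  by rewrite addrA.
have [be0|be0] := lerP be 0.
  have := HN 1%N isT; rewrite mulr1.
  have : be / 2 <= 0 by rewrite pmulr_lle0 // invr_gt0 ltr0n.
  lra.
rewrite leNgt; apply/negP => HX.
set X := phi 1 - phi 0 - (al + be / 2).
have X0 : 0 < X by rewrite subr_gt0.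
have B0 : 0 <= be / (2 * X) by rewrite divr_ge0 ?ltW // mulr_gt0.
set N := Num.Def.archi_bound (be / (2 * X)).
have hN := archi_boundP B0.
have N0 : (0 < N)%N by rewrite -(ltr0n R); apply: le_lt_trans hN.
have := HN N N0.
have Np : 0 < N%:R :> R by rewrite ltr0n.
have : be / (2 * N%:R) < X.
  rewrite ltr_pdivrMr ?mulr_gt0 //.
  rewrite ltr_pdivrMr ?mulr_gt0 // in hN.
  lra.
rewrite /X; lra.
Qed.

End OneD.

Section Grad.
Local Open Scope classical_set_scope.
Variables (R : realType) (d : nat).

Lemma grad_ineq (f : 'rV[R]_d -> R) (gradf : 'rV[R]_d -> 'rV[R]_d) :
  convex_fun f ->
  (forall x1 : 'rV[R]_d, differentiable f x1 /\
     ('d f x1 : 'rV[R]_d -> R) = (fun h => dotp (gradf x1) h)) ->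
  forall a b, f a + dotp (gradf a) (b - a) <= f b.
Proof.
move=> cvx Hd a b; set v := b - a.
have [dfa dfE] := Hd a.
have Dv : 'D_v f a = dotp (gradf a) v by rewrite deriveE // dfE.
have dv : derivable f a v by exact: diff_derivable.
have C1 : (fun h : R => h^-1 *: ((f \o shift a) (h *: v) - f a)) @ 0^' --> 'D_v f a.
  exact: dv.
have sub : (0:R)^'+ `=>` (0:R)^'.
  by apply: within_subset => u /= hu; rewrite gt_eqF.
have C2 := cvg_trans (cvg_app _ sub) C1.
rewrite -lerBrDl -Dv.
rewrite -(cvg_lim _ C2) //.
apply: limr_le; first by apply/cvg_ex; eexists; exact: C2.
near=> h.
have h0 : 0 < h by near: h; exact: nbhs_right_gt.
have h1 : h < 1 by near: h; exact: nbhs_right_lt.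
rewrite /=.
have E : h *: v + a = h *: b + (1 - h) *: a.
  by apply/rowP => i; rewrite !mxE; ring.
rewrite E.
have := cvx b a h; rewrite (ltW h0) (ltW h1) => /(_ isT) H.
rewrite ler_pdivrMl //.
lra.
Unshelve. all: by end_near.
Qed.

End Grad.
Section Err.
Variables (R : realType) (d m : nat) (blk : 'I_d -> 'I_m)
  (f : 'rV[R]_d -> R) (gradf : 'rV[R]_d -> 'rV[R]_d) (Q : 'I_m -> 'M[R]_d) (L : R).
Hypothesis cvx : convex_fun f.
Hypothesis Hd : forall x1 : 'rV[R]_d, differentiable f x1 /\
     ('d f x1 : 'rV[R]_d -> R) = (fun h => dotp (gradf x1) h).
Hypothesis Qpsd : forall j, psd (Q j).
Hypothesis Hlip : forall j x1 y1,
  sqnorm (bmask blk j (gradf x1 - gradf y1)) <= quadf (Q j) (x1 - y1).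
Hypothesis L0 : 0 < L.
Hypothesis HL : L ^+ 2 = 2 * opnorm2 (Qtilde blk Q).

Lemma S0 : 0 < opnorm2 (Qtilde blk Q).
Proof. have : 0 < L ^+ 2 by rewrite exprn_gt0. rewrite HL; lra. Qed.

Lemma Qt_bound u : quadf (Qtilde blk Q) u <= L ^+ 2 / 2 * sqnorm u.
Proof.
rewrite HL mulrC (mulrC 2) mulfK ?pnatr_eq0 // mulrC.
exact: opnorm_bound S0.
Qed.

Definition Wv (x y : 'rV[R]_d) (n : nat) : 'rV[R]_d :=
  \row_i (if (blk i < n)%N then x ord0 i else y ord0 i).

Lemma grad_gap (x y : 'rV[R]_d) :
  sqnorm (gradf x - \row_i gradf (mixv blk (blk i) x y) ord0 i)
  <= L ^+ 2 / 2 * sqnorm (x - y).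
Proof.
apply: le_trans (Qt_bound (x - y)); rewrite quadf_Qtilde -(sqnorm_part blk).
apply: ler_sum => j _.
have E : bmask blk j (gradf x - \row_i gradf (mixv blk (blk i) x y) ord0 i)
  = bmask blk j (gradf x - gradf (mixv blk j x y)).
  by apply/rowP => i; rewrite !mxE; case: eqP => // ->.
rewrite E; apply: le_trans (Hlip _ _ _) _.
have -> : x - mixv blk j x y = tmask blk j.+1 (x - y).
  by apply/rowP => i; rewrite !mxE; case: leqP => h; rewrite ?subrr.
by rewrite lerDr; apply: quadf_ge0.
Qed.

Lemma err_bound (x y : 'rV[R]_d) :
  f y - f x - dotp (gradf x) (y - x) <= L / 2 * sqnorm (y - x).
Proof.
set del := y - x; set G := gradf x; set s0 := L / 2.
have s00 : 0 < s0 by rewrite divr_gt0.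
pose D (j : 'I_m) := bmask blk j del.
pose q1 (j : 'I_m) := quadf (Q j) (tmask blk j del).
pose q2 (j : 'I_m) := quadf (Q j) (tmask blk j.+1 del).
have Hj : forall j : 'I_m, f (Wv x y j) - f (Wv x y j.+1) <=
    dotp G (D j) + (q1 j + q2 j) / (4 * s0) + s0 * sqnorm (D j) / 2.
  move=> j.
  pose P (t : R) := Wv x y j.+1 + t *: D j.
  have P1 : P 1 = Wv x y j.
    apply/rowP => i; rewrite !mxE mul1r ltnS.
    rewrite -[blk i == j]/(nat_of_ord (blk i) == nat_of_ord j).
    case: (ltngtP (blk i) j) => h /=.
    - by rewrite addr0.
    - by rewrite addr0.
    - by rewrite addrC subrK.
  have P0 : P 0 = Wv x y j.+1 by rewrite /P scale0r addr0.
  have R1 : f (P 1) - f (P 0) <= (dotp G (D j) + q2 j / (2 * s0) + s0 * sqnorm (D j) / 2)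
    + ((q1 j - q2 j) / (2 * s0)) / 2.
  apply: (@riemann R (fun t => f (P t)) (fun s => dotp (gradf (P s)) (D j))).
  - move=> t s; have := grad_ineq cvx Hd (P s) (P t).
    have -> : P t - P s = (t - s) *: D j.
      by rewrite /P opprD addrACA subrr add0r -scalerBl.
    rewrite dotpZr; lra.
  - move=> s /andP[s0' s1].
    have E1 : dotp (gradf (P s)) (D j) = dotp G (D j) +
        dotp (bmask blk j (gradf (P s) - gradf x)) (D j).
      by rewrite -dotp_bmask /D bmaskK dotpBl /G; ring.
    have Y := young (bmask blk j (gradf (P s) - gradf x)) (D j) s00.
    have L1 := Hlip j (P s) x.
    have E2 : P s - x = (1 - s) *: tmask blk j.+1 del + s *: tmask blk j del.
      apply/rowP => i; rewrite !mxE ltnS.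
      rewrite -[blk i == j]/(nat_of_ord (blk i) == nat_of_ord j).
      by case: (ltngtP (blk i) j) => h /=; ring.
    have st : 0 <= s <= 1 by rewrite s0' s1.
    have C := @quadf_convex R d (Q j) s (tmask blk j.+1 del) (tmask blk j del) (Qpsd j) st.
    rewrite -E2 in C; rewrite E1.
    have : quadf (Q j) (P s - x) / (2 * s0) <=
        ((1 - s) * q2 j + s * q1 j) / (2 * s0).
      by rewrite ler_pdivrMr ?mulr_gt0 // divfK ?gt_eqF ?mulr_gt0.
    move=> H3.
    have : sqnorm (bmask blk j (gradf (P s) - gradf x)) / (2 * s0) <=
        quadf (Q j) (P s - x) / (2 * s0).
      by rewrite ler_pdivrMr ?mulr_gt0 // divfK ?gt_eqF ?mulr_gt0.
    move=> H4.
    have -> : dotp G (D j) + q2 j / (2 * s0) + s0 * sqnorm (D j) / 2 +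
      (q1 j - q2 j) / (2 * s0) * s =
      dotp G (D j) + ((1 - s) * q2 j + s * q1 j) / (2 * s0) + s0 * sqnorm (D j) / 2.
      by field; rewrite gt_eqF.
    lra.
  rewrite P1 P0 in R1; apply: le_trans R1 _.
  have -> : dotp G (D j) + q2 j / (2 * s0) + s0 * sqnorm (D j) / 2 +
      (q1 j - q2 j) / (2 * s0) / 2 =
      dotp G (D j) + (q1 j + q2 j) / (4 * s0) + s0 * sqnorm (D j) / 2.
    by field; rewrite gt_eqF.
  by [].
have Hs : \sum_(j < m) (f (Wv x y j) - f (Wv x y j.+1)) <=
  \sum_(j < m) (dotp G (D j) + (q1 j + q2 j) / (4 * s0) + s0 * sqnorm (D j) / 2).
  by apply: ler_sum => j _; exact: Hj j.
have T : \sum_(j < m) (f (Wv x y j) - f (Wv x y j.+1)) = f y - f x.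
  rewrite -(big_mkord xpredT (fun j => f (Wv x y j) - f (Wv x y j.+1))).
  rewrite (telescope_sumr_eq (fun k => - f (Wv x y k))) //; last first.
    by move=> k _; rewrite opprK addrC.
  have -> : Wv x y 0 = y by apply/rowP => i; rewrite !mxE.
  have -> : Wv x y m = x by apply/rowP => i; rewrite !mxE ltn_ord.
  by rewrite opprK addrC.
have Eq : \sum_(j < m) (q1 j + q2 j) = quadf (Qtilde blk Q) del.
  by rewrite quadf_Qtilde.
rewrite T big_split /= big_split /= -!mulr_suml -mulr_sumr Eq in Hs.
rewrite dotp_part sqnorm_part in Hs.
have Qb := Qt_bound del.
have sq := sqnorm_ge0 del.
rewrite /s0 in Hs *.
have : quadf (Qtilde blk Q) del / (4 * (L / 2)) <= L ^+ 2 / 2 * sqnorm del / (4 * (L / 2)).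
  by rewrite ler_pdivrMr ?mulr_gt0 // divfK ?gt_eqF ?mulr_gt0.
have -> : L ^+ 2 / 2 * sqnorm del / (4 * (L / 2)) = L / 4 * sqnorm del.
  by field; rewrite gt_eqF.
lra.
Qed.

End Err.

Unset Implicit Arguments.
Set Strict Implicit.

Theorem lemma3 (R : realType) (d m : nat) (blk : 'I_d -> 'I_m)
  (f : 'rV[R]_d -> R) (gradf : 'rV[R]_d -> 'rV[R]_d)
  (g : 'rV[R]_d -> \bar R) (gj : 'I_m -> 'rV[R]_d -> \bar R)
  (Q : 'I_m -> 'M[R]_d) (gamma L : R) (x0 : 'rV[R]_d)
  (x v y p q z : nat -> 'rV[R]_d) (a A : nat -> R) :
  (* blocks *)
  consecutive_blocks blk ->
  (* f convex, continuously differentiable with gradient gradf *)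
  convex_fun f ->
  (forall x1 : 'rV[R]_d, differentiable f x1 /\
     ('d f x1 : 'rV[R]_d -> R) = (fun h => dotp (gradf x1) h)) ->
  continuous gradf ->
  (* g proper, lsc, gamma-strongly convex, block separable *)
  0 <= gamma ->
  proper_fun g -> lower_semicontinuous g -> strongly_convex gamma g ->
  (forall j, depends_only_on_block blk j (gj j)) ->
  (forall x1, g x1 = (\sum_(j < m) gj j x1)%E) ->
  (* block Lipschitz *)
  (forall j, psd (Q j)) ->
  (forall j x1 y1, sqnorm (bmask blk j (gradf x1 - gradf y1)) <= quadf (Q j) (x1 - y1)) ->
  0 < L -> L ^+ 2 = 2 * opnorm2 (Qtilde blk Q) ->
  (* initialization *)
  (g x0 < +oo)%E ->
  x 0%N = x0 -> v 0%N = x0 -> y 0%N = x0 -> p 0%N = gradf x0 -> z 0%N = 0 ->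
  a 0%N = 0 -> A 0%N = 0 ->
  (* iterations k >= 1 *)
  (forall k, (1 <= k)%N -> A k = A k.-1 + a k) ->
  (forall k, (1 <= k)%N ->
     [/\ 0 < a k, a k ^+ 2 / A k <= 2 * (1 + A k.-1 * gamma) / (5 * L)
       & forall b, 0 < b -> b ^+ 2 / (A k.-1 + b) <= 2 * (1 + A k.-1 * gamma) / (5 * L) ->
           b <= a k]) ->
  (forall k, (1 <= k)%N -> x k = (A k.-1 / A k) *: y k.-1 + (a k / A k) *: v k.-1) ->
  (forall k, (1 <= k)%N -> forall i,
     p k ord0 i = gradf (mixv blk (blk i) (x k) (y k)) ord0 i) ->
  (forall k, (1 <= k)%N -> forall i,
     q k ord0 i = p k ord0 i + a k.-1 / a k * (gradf (x k.-1) ord0 i - p k.-1 ord0 i)) ->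
  (forall k, (1 <= k)%N -> z k = z k.-1 + a k *: q k) ->
  (forall k, (1 <= k)%N -> forall (j : 'I_m) (w : 'rV[R]_d),
     ((A k)%:E * gj j (v k) + (sqnorm (bmask blk j (v k - (x0 - z k))) / 2)%:E <=
      (A k)%:E * gj j w + (sqnorm (bmask blk j (w - (x0 - z k))) / 2)%:E)%E) ->
  (forall k, (1 <= k)%N -> y k = (A k.-1 / A k) *: y k.-1 + (a k / A k) *: v k) ->
  forall (k : nat) (u : 'rV[R]_d), (1 <= k)%N ->
    A k * (f (y k) - f (x k)) - A k.-1 * (f (y k.-1) - f (x k))
    - a k * dotp (q k) (v k - x k) + a k * dotp (gradf (x k) - q k) (x k - u)
    - (1 + A k.-1 * gamma) / 2 * sqnorm (v k - v k.-1)
    <=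
    a k * dotp (gradf (x k) - p k) (v k - u)
    - a k.-1 * dotp (gradf (x k.-1) - p k.-1) (v k.-1 - u)
    - (1 + A k.-1 * gamma) / 10 * sqnorm (v k - v k.-1)
    + (1 + A k.-2 * gamma) / 10 * sqnorm (v k.-1 - v k.-2).
Proof.
move=> _ cvx Hd _ gam0 _ _ _ _ _ Qpsd Hlip L0 HL _ hx0 hv0 hy0 hp0 hz0 ha0 hA0
  HA Hstep Hx Hp Hq Hz _ Hy k u k1.
have A_ge0 : forall n, 0 <= A n.
  elim=> [|n IH]; first by rewrite hA0.
  by rewrite HA // addr_ge0 // ltW //; case: (Hstep n.+1 isT).
have A_mono : forall n, A n.-1 <= A n.
  case=> [|n] //=; rewrite (HA n.+1) //= lerDl ltW //; by case: (Hstep n.+1 isT).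
have A_gt0 : forall n, (1 <= n)%N -> 0 < A n.
  move=> n n1; rewrite HA // ltr_pwDr ?A_ge0 //; by case: (Hstep n n1).
have I1 : forall n, (1 <= n)%N -> y n - x n = (a n / A n) *: (v n - v n.-1).
  move=> n n1; rewrite Hy // Hx //; apply/rowP => i; rewrite !mxE; ring.
have hHgen : forall n, sqnorm (a n *: (gradf (x n) - p n)) <=
    2 * (1 + A n.-1 * gamma) ^+ 2 / 25 * sqnorm (v n - v n.-1).
  have sq0 := @sqnorm_ge0 R d.
  case=> [|n].
    by rewrite ha0 sqnormZ expr0n /= mul0r mulr_ge0 // divr_ge0 // mulr_ge0 // sqr_ge0.
  set c' := 1 + A n.+1.-1 * gamma.
  have c'1 : 1 <= c' by rewrite lerDl mulr_ge0.
  set sig' := sqnorm (v n.+1 - v n.+1.-1).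
  have sig'0 : 0 <= sig' by exact: sq0.
  set H := gradf (x n.+1) - p n.+1.
  have F3 := grad_gap Qpsd Hlip L0 HL (x n.+1) (y n.+1).
  have Ep : \row_i gradf (mixv blk (blk i) (x n.+1) (y n.+1)) ord0 i = p n.+1.
    by apply/rowP => i; rewrite mxE Hp.
  rewrite Ep -/H in F3.
  have Exy : x n.+1 - y n.+1 = - ((a n.+1 / A n.+1) *: (v n.+1 - v n)).
    by rewrite -I1 // opprB.
  rewrite Exy sqnormN sqnormZ -/sig' in F3.
  have [ak' hst' _] := Hstep n.+1 isT.
  have Ak' := A_gt0 n.+1 isT.
  rewrite sqnormZ.
  set r := a n.+1 ^+ 2 / A n.+1 in hst'.
  have r0 : 0 <= r by rewrite divr_ge0 ?sqr_ge0 ?ltW.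
  have Lr : L * r <= 2 * c' / 5.
    rewrite mulrC -ler_pdivlMr //; apply: le_trans hst' _.
    by rewrite /c' invfM mulrA.
  have Lr2 : (L * r) ^+ 2 <= (2 * c' / 5) ^+ 2.
    have Lr0 : 0 <= L * r by rewrite mulr_ge0 // ltW.
    nra.
  have E : a n.+1 ^+ 2 * (L ^+ 2 / 2 * ((a n.+1 / A n.+1) ^+ 2 * sig'))
      = (L * r) ^+ 2 / 2 * sig'.
    by rewrite /r; field; rewrite gt_eqF.
  apply: le_trans (_ : a n.+1 ^+ 2 * (L ^+ 2 / 2 * ((a n.+1 / A n.+1) ^+ 2 * sig')) <= _).
    by rewrite ler_wpM2l ?sqr_ge0.
  rewrite E.
  have -> : 2 * c' ^+ 2 / 25 * sig' = (2 * c' / 5) ^+ 2 / 2 * sig' by field.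
  by rewrite ler_wpM2r // ler_wpM2r.
case: k k1 => // k' _.
set k := k'.+1.
have -> : k.-1 = k' by [].
try have -> : k.-2 = k'.-1 by [].
have Ak := A_gt0 k isT.
have [ak hstk _] := Hstep k isT.
have HAk : A k = A k' + a k by rewrite HA.
have I2 : A k' *: (y k' - x k) = a k *: (x k - v k').
  rewrite Hx //; apply/rowP => i; rewrite !mxE /=.
  have Ak' : 0 < A k' + a k by rewrite -HAk.
  rewrite HAk; field; rewrite gt_eqF //.
have I3 : a k *: q k = a k *: p k + a k' *: (gradf (x k') - p k').
  apply/rowP => i; rewrite !mxE Hq //= mulrDr; congr (_ + _).
  by rewrite mulrA mulrCA divff ?gt_eqF // mulr1.
set G := gradf (x k); set P := p k; set H := gradf (x k') - p k'.
set c := 1 + A k' * gamma; set c' := 1 + A k'.-1 * gamma.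
have c'1 : 1 <= c' by rewrite lerDl mulr_ge0.
have cc' : c' <= c by rewrite lerD2l ler_wpM2r.
set sig := sqnorm (v k - v k').
set sig' := sqnorm (v k' - v k'.-1).
have sig0 : 0 <= sig by exact: sqnorm_ge0.
have sig'0 : 0 <= sig' by exact: sqnorm_ge0.
have h1 : a k * (dotp G (x k) - dotp G (v k')) <= A k' * (f (y k') - f (x k)).
  have F1 := grad_ineq cvx Hd (x k) (y k').
  have E : A k' * dotp G (y k' - x k) = a k * (dotp G (x k) - dotp G (v k')).
    by rewrite -dotpZr I2 dotpZr dotpBr.
  rewrite -E; apply: ler_wpM2l; first exact: A_ge0.
  rewrite /G; lra.
have h2 : A k * (f (y k) - f (x k)) <=
    a k * (dotp G (v k) - dotp G (v k')) + L / 2 * (a k ^+ 2 / A k) * sig.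
  have F2 := err_bound cvx Hd Qpsd Hlip L0 HL (x k) (y k).
  rewrite I1 // dotpZr sqnormZ dotpBr -/G -/sig in F2.
  have -> : a k * (dotp G (v k) - dotp G (v k')) + L / 2 * (a k ^+ 2 / A k) * sig
     = A k * (a k / A k * (dotp G (v k) - dotp G (v k')) + L / 2 * ((a k / A k) ^+ 2 * sig)).
    by field; rewrite gt_eqF.
  rewrite ler_pM2l //; lra.
have h3 : forall w, a k * dotp (q k) w = a k * dotp P w + a k' * dotp H w.
  by move=> w; rewrite -dotpZl I3 dotpDl !dotpZl.
have hH := hHgen k'.
rewrite -/H -/c' -/sig' in hH.
have h4 : - (a k' * (dotp H (v k) - dotp H (v k'))) <= c' / 10 * sig' + c' / 5 * sig.
  have s0 : 0 < 2 * c' / 5 by rewrite divr_gt0 // mulr_gt0 // (lt_le_trans ltr01 c'1).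
  have Y := young (a k' *: H) (- (v k - v k')) s0.
  rewrite dotpZl dotpNr dotpBr sqnormN -/sig mulrN in Y.
  apply: le_trans Y _.
  have : sqnorm (a k' *: H) / (2 * (2 * c' / 5)) <= c' / 10 * sig'.
    have s2 : 0 < 2 * (2 * c' / 5) by rewrite mulr_gt0.
    rewrite ler_pdivrMr //.
    have -> : c' / 10 * sig' * (2 * (2 * c' / 5)) = 2 * c' ^+ 2 / 25 * sig' by field.
    exact: hH.
  move=> Hb.
  have -> : 2 * c' / 5 * sig / 2 = c' / 5 * sig by field.
  lra.
have h5 : L / 2 * (a k ^+ 2 / A k) * sig <= c / 5 * sig.
  rewrite ler_wpM2r //.
  have -> : c / 5 = L / 2 * (2 * c / (5 * L)) by field; rewrite gt_eqF.
  by rewrite ler_wpM2l // divr_ge0 // ltW.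
have h6 : c' * sig <= c * sig by rewrite ler_wpM2r.
rewrite -/c -/c' -/sig -/sig'.
rewrite !dotpBl !dotpBr.
have hv := h3 (v k); have hx := h3 (x k); have hu := h3 u.
rewrite !dotpBl in hv hx hu *.
rewrite /H !dotpBl in h4 hv hx hu *.
lra.
Qed.
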